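(* $\mathsf{AP}(R_2,R_3)=\mathsf{AP}(R_3,R_2)=\mathsf{N}$.
   Context: Tuples in $\{0,1\}^4$ are written as strings $abcd$. The relations $R_1,\dots,R_5\subseteq\{0,1\}^4$ are $R_1=\{0000,1000,0100,1100,1010,0110,1001,0101,0011,1011,0111,1111\}$, $R_2=\{0000,1000,0100,1100,1010,0101,0011,1111\}$, $R_3=\{0000,1100,1010,0101,0011,1011,0111,1111\}$, $R_4=\{0000,1100,1010,0101,0011,1111\}$, $R_5=\{0000,1100,1010,0110,1001,0101,0011,1111\}$. For $R,S\subseteq\{0,1\}^4$, a Boolean function $f\colon\{0,1\}^n\to\{0,1\}$ is analogy-preserving relative to $(R,S)$ if for all $\mathbf{a},\mathbf{b},\mathbf{c},\mathbf{d}\in\{0,1\}^n$ with $(a_i,b_i,c_i,d_i)\in R$ for every $i$ and such that $(f(\mathbf{a}),f(\mathbf{b}),f(\mathbf{c}),x)\in S$ for some $x\in\{0,1\}$, we have $(f(\mathbf{a}),f(\mathbf{b}),f(\mathbf{c}),f(\mathbf{d}))\in S$; $\mathsf{AP}(R,S)$ is the set of all such functions of all arities. $\mathsf{N}$ is the set of all Boolean functions (of all arities) that are constant or the negation of a projection. *)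

(* Defs.v *)
From mathcomp Require Import all_boot.
Set Implicit Arguments. Unset Strict Implicit. Unset Printing Implicit Defensive.

(* A relation R ⊆ {0,1}^4 is given by the list of its tuples, each tuple
   abcd written as the digit list [:: a; b; c; d]. *)
Definition rel4 := seq (seq nat).

Definition in_rel (R : rel4) (a b c d : bool) : bool :=
  [:: nat_of_bool a; nat_of_bool b; nat_of_bool c; nat_of_bool d] \in R.

Definition R1 : rel4 :=
  [:: [::0;0;0;0]; [::1;0;0;0]; [::0;1;0;0]; [::1;1;0;0]; [::1;0;1;0]; [::0;1;1;0];
      [::1;0;0;1]; [::0;1;0;1]; [::0;0;1;1]; [::1;0;1;1]; [::0;1;1;1]; [::1;1;1;1]].
Definition R2 : rel4 :=
  [:: [::0;0;0;0]; [::1;0;0;0]; [::0;1;0;0]; [::1;1;0;0]; [::1;0;1;0]; [::0;1;0;1];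
      [::0;0;1;1]; [::1;1;1;1]].
Definition R3 : rel4 :=
  [:: [::0;0;0;0]; [::1;1;0;0]; [::1;0;1;0]; [::0;1;0;1]; [::0;0;1;1]; [::1;0;1;1];
      [::0;1;1;1]; [::1;1;1;1]].
Definition R4 : rel4 :=
  [:: [::0;0;0;0]; [::1;1;0;0]; [::1;0;1;0]; [::0;1;0;1]; [::0;0;1;1]; [::1;1;1;1]].
Definition R5 : rel4 :=
  [:: [::0;0;0;0]; [::1;1;0;0]; [::1;0;1;0]; [::0;1;1;0]; [::1;0;0;1]; [::0;1;0;1];
      [::0;0;1;1]; [::1;1;1;1]].

Definition boolfun (n : nat) := ('I_n -> bool) -> bool.

Definition AP (R S : rel4) (n : nat) (f : boolfun n) : Prop :=
  forall a b c d : 'I_n -> bool,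
    (forall i : 'I_n, in_rel R (a i) (b i) (c i) (d i)) ->
    (exists x : bool, in_rel S (f a) (f b) (f c) x) ->
    in_rel S (f a) (f b) (f c) (f d).

Definition inN (n : nat) (f : boolfun n) : Prop :=
  (exists c : bool, forall x, f x = c) \/ (exists i : 'I_n, forall x, f x = ~~ x i).

(* Main.v *)
Require Import Defs.
From mathcomp Require Import all_boot.

Lemma APuse n (f : boolfun n) R S a b c d : AP R S f ->
  (forall i, in_rel R (a i) (b i) (c i) (d i)) ->
  forall x, in_rel S (f a) (f b) (f c) x -> in_rel S (f a) (f b) (f c) (f d).
Proof. by move=> H Hr x Hx; apply: H => //; exists x. Qed.

Lemma key n (f : boolfun n) : AP R2 R3 f -> inN f.
Proof.
move=> H.
pose z := (fun _ : 'I_n => false).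
pose e := (fun (j : 'I_n) (i : 'I_n) => i == j).
case Hz: (f z); last first.
  left; exists false => x.
  have := @APuse _ f _ _ (z) (x) (z) (z) H.
  have R : forall i, in_rel R2 (z i) (x i) (z i) (z i) by move=> i; rewrite /z; case: (x i).
  move=> /(_ R (f x)); rewrite Hz; by case: (f x) => //= /(_ isT).
have down : forall u v : 'I_n -> bool, f u = true -> (forall j, v j -> u j) -> f v = true.
  move=> u v Hu Huv.
  have := @APuse _ f _ _ (z) (u) (z) (v) H.
  have R : forall i, in_rel R2 (z i) (u i) (z i) (v i).
    by move=> i; rewrite /z; case: (u i) (v i) (Huv i) => [] [] //= /(_ isT).
  move=> /(_ R true); rewrite Hz Hu; case: (f v) => //; by move/(_ isT).
have union : forall k (x : 'I_n -> bool), (forall j : 'I_n, x j -> j < k) ->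
    (forall j, x j -> f (e j) = true) -> f x = true.
  elim=> [|k IH] x Hs Hx.
    by apply: (down z) => // j /Hs.
  pose y := fun j : 'I_n => x j && (j < k).
  pose b := fun j : 'I_n => x j && (nat_of_ord j == k).
  have fy : f y = true.
    apply: IH => j; rewrite /y; first by case/andP.
    by case/andP => /Hx.
  have fb : f b = true.
    case: (pickP b) => [j bj|nb].
      apply: (down (e j)); first by apply: Hx; case/andP: bj.
      move=> i; rewrite /b /e; case/andP: bj => _ /eqP <-.
      by case/andP => _ /eqP Hi; apply/eqP; apply: val_inj.
    by apply: (down z) => // j; rewrite nb.
  have := @APuse _ f _ _ (z) (b) (y) (x) H.
  have R : forall i, in_rel R2 (z i) (b i) (y i) (x i).
    move=> i; rewrite /z /b /y; case: (x i) (Hs i) => //= /(_ isT).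
    rewrite ltnS leq_eqVlt; case/orP => [/eqP ->|lt]; first by rewrite eqxx ltnn.
    by rewrite lt (ltn_eqF lt).
  move=> /(_ R true); rewrite Hz fb fy; case: (f x) => //; by move/(_ isT).
have mono : forall i (x : 'I_n -> bool), f (e i) = false -> x i -> f x = false.
  move=> i x Hi xi; case Hx: (f x) => //.
  suff : f (e i) = true by rewrite Hi.
  by apply: (down x) => // j; rewrite /e => /eqP ->.
have pair : forall i j, i != j -> f (e i) = false -> f (e j) = false -> False.
  move=> i j Hij Hi Hj.
  pose c := fun t : 'I_n => (t == i) || (t == j).
  have fc : f c = false by apply: (mono i); rewrite // /c eqxx.
  have := @APuse _ f _ _ (e i) (z) (c) (e j) H.
  have R : forall t, in_rel R2 (e i t) (z t) (c t) (e j t).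
    move=> t; rewrite /e /z /c; case: (eqVneq t i) => [->|_].
      by rewrite (negbTE Hij).
    by case: (t == j).
  by move=> /(_ R true); rewrite Hi Hz fc Hj; move/(_ isT).
case: (pickP (fun i => ~~ f (e i))) => [i /negbTE Hi|none].
  right; exists i => x.
  case xi: (x i); first by apply: (mono i).
  apply: (union n) => // j xj.
  case fej: (f (e j)) => //; exfalso.
  apply: (pair i j) => //.
  by apply/eqP => Eij; move: xi; rewrite Eij xj.
left; exists true => x; apply: (union n) => // j _.
by move: (none j) => /= /negbFE.
Qed.

Lemma ext_AP n (f : boolfun n) R S : AP R S f ->
  in_rel R false false false false -> in_rel R true true true true ->
  in_rel S false false false false -> in_rel S true true true true ->
  ~~ in_rel S false false false true -> ~~ in_rel S true true true false ->
  forall x y, (forall i, x i = y i) -> f x = f y.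
Proof.
move=> H r0 r1 s0 s1 n0 n1 x y E.
have := @APuse _ f _ _ (x) (x) (x) (y) H.
have R' : forall i, in_rel R (x i) (x i) (x i) (y i) by move=> i; rewrite -E; case: (x i).
move=> /(_ R' (f x)).
case: (f x) (f y) => [] [] // Hc.
  by move: (Hc s1); move/negP: n1.
by move: (Hc s0); move/negP: n0.
Qed.

Lemma neg32 p q r s : in_rel R3 (~~p) (~~q) (~~r) (~~s) = in_rel R2 p q r s.
Proof. by case: p; case: q; case: r; case: s. Qed.

Lemma neg23 p q r s : in_rel R2 (~~p) (~~q) (~~r) (~~s) = in_rel R3 p q r s.
Proof. by case: p; case: q; case: r; case: s. Qed.

Lemma N_AP23 n (f : boolfun n) : inN f -> AP R2 R3 f.
Proof.
case=> [[c Hc]|[i Hi]] a b c0 d Hr [x Hx].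
  by rewrite !Hc in Hx *; move: Hx; clear Hc; case: c; case: x.
by rewrite !Hi neg32.
Qed.

Lemma N_AP32 n (f : boolfun n) : inN f -> AP R3 R2 f.
Proof.
case=> [[c Hc]|[i Hi]] a b c0 d Hr [x Hx].
  by rewrite !Hc in Hx *; move: Hx; clear Hc; case: c; case: x.
by rewrite !Hi neg23.
Qed.

Theorem mainTheorem14 :
  forall (n : nat) (f : boolfun n),
    (AP R2 R3 f <-> inN f) /\ (AP R3 R2 f <-> inN f).
Proof.
move=> n f; split; split; [exact: key | exact: N_AP23 | | exact: N_AP32].
move=> H.
have ext := @ext_AP _ f _ _ H isT isT isT isT isT isT.
pose k := fun x : 'I_n -> bool => ~~ f (fun i => ~~ x i).
have Hk : AP R2 R3 k.
  move=> a b c d Hr [x Hx].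
  rewrite /k -neg23 !negbK.
  apply: H.
    by move=> i; rewrite neg32.
  by exists (~~ x); rewrite -neg32 !negbK.
case: (@key _ k Hk) => [[c Hc]|[i Hi]].
  left; exists (~~ c) => x.
  rewrite -(Hc (fun i => ~~ x i)) /k negbK; apply: ext => i; by rewrite negbK.
right; exists i => x.
have := Hi (fun i => ~~ x i); rewrite /k => /(congr1 negb); rewrite !negbK => <-.
apply: ext => j; by rewrite negbK.
Qed.
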